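(* Let $G$ be a $\sigma$-compact locally compact Abelian group and $\Lambda\subset G$ relatively dense. The following are equivalent: (i) $\Lambda-\Lambda-\Lambda$ is locally finite; (ii) $\Lambda-\Lambda-\Lambda$ is uniformly discrete; (iii) $\Lambda$ is locally finite and there is a finite set $F\subset G$ with $\Lambda-\Lambda\subset\Lambda+F$.
   Context: Locally finite: $A\cap K$ finite for every compact $K$. Uniformly discrete: there is an open neighbourhood $U$ of $0$ with $(x+U)\cap A=\{x\}$ for all $x\in A$. Relatively dense: $\Lambda+K=G$ for some compact $K$. *)

(* Defs.v *)
From HB Require Import structures.
From mathcomp Require Import all_boot all_order all_algebra.
From Stdlib Require Import List.
Set Implicit Arguments. Unset Strict Implicit. Unset Printing Implicit Defensive.
Import GRing.Theory.
Local Open Scope ring_scope.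

Definition subset_of (T : Type) := T -> Prop.

Definition is_topology (T : Type) (open : subset_of T -> Prop) : Prop :=
  [/\ open (fun _ => True),
      open (fun _ => False),
      (forall U V, open U -> open V -> open (fun x => U x /\ V x)),
      (forall (I : Type) (U : I -> subset_of T), (forall i, open (U i)) ->
          open (fun x => exists i, U i x)) &
      (forall U V, (forall x, U x <-> V x) -> open U -> open V)].

Definition compact (T : Type) (open : subset_of T -> Prop) (K : subset_of T) : Prop :=
  forall (I : Type) (U : I -> subset_of T), (forall i, open (U i)) ->
    (forall x, K x -> exists i, U i x) ->
    exists s : list I, forall x, K x -> exists i, In i s /\ U i x.

Definition hausdorff (T : Type) (open : subset_of T -> Prop) : Prop :=
  forall x y : T, x <> y -> exists U V, [/\ open U, open V, U x, V y &
    forall z, U z -> V z -> False].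

Definition top_group (G : zmodType) (open : subset_of G -> Prop) : Prop :=
  is_topology open /\
  forall (x y : G) (W : subset_of G), open W -> W (x - y) ->
    exists U V, [/\ open U, open V, U x, V y &
      forall u v, U u -> V v -> W (u - v)].

Definition locally_compact (T : Type) (open : subset_of T -> Prop) : Prop :=
  forall x : T, exists U K, [/\ open U, U x, compact open K &
    forall y, U y -> K y].

Definition sigma_compact (T : Type) (open : subset_of T -> Prop) : Prop :=
  exists K : nat -> subset_of T, (forall n, compact open (K n)) /\
    forall x, exists n, K n x.

Definition sigma_compact_LCA (G : zmodType) (open : subset_of G -> Prop) : Prop :=
  [/\ top_group open, hausdorff open, locally_compact open & sigma_compact open].

Definition finite_set (T : Type) (A : subset_of T) : Prop :=
  exists s : list T, forall x, A x -> In x s.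

Definition locally_finite (T : Type) (open : subset_of T -> Prop) (A : subset_of T) :=
  forall K, compact open K -> finite_set (fun x => A x /\ K x).

Definition uniformly_discrete (G : zmodType) (open : subset_of G -> Prop)
    (A : subset_of G) : Prop :=
  exists U, [/\ open U, U 0 &
    forall x, A x -> forall y, A y -> (exists u, U u /\ y = x + u) -> y = x].

Definition relatively_dense (G : zmodType) (open : subset_of G -> Prop)
    (L : subset_of G) : Prop :=
  exists K, compact open K /\ forall g, exists l k, [/\ L l, K k & g = l + k].

Definition diff3 (G : zmodType) (L : subset_of G) : subset_of G :=
  fun z => exists a b c, [/\ L a, L b, L c & z = a - b - c].
Definition diff2 (G : zmodType) (L : subset_of G) : subset_of G :=
  fun z => exists a b, [/\ L a, L b & z = a - b].
Definition plus_set (G : zmodType) (L F : subset_of G) : subset_of G :=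
  fun z => exists l f, [/\ L l, F f & z = l + f].

(* Main.v *)
Require Import Defs.
From mathcomp Require Import all_boot all_order all_algebra.
From Stdlib Require List.
From Stdlib Require Import Classical.
Set Implicit Arguments. Unset Strict Implicit. Unset Printing Implicit Defensive.
Import GRing.Theory.
Local Open Scope ring_scope.

Lemma open_shift (G : zmodType) (open : subset_of G -> Prop) (W : subset_of G) (a : G) :
  top_group open -> open W -> open (fun y => W (y - a)).
Proof.
move=> [[_ _ _ Hun Hext] Hc] HW.
pose J := { U : subset_of G | open U /\ forall u, U u -> W (u - a) }.
apply: (Hext (fun x => exists j : J, proj1_sig j x)); last first.
  apply: Hun => j; exact: (proj1 (proj2_sig j)).
move=> x; split.
  by move=> [[U [_ HU]] /= Ux]; exact: HU.
move=> Hx. have [U [V [oU oV Ux Va HUV]]] := Hc x a W HW Hx.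
by exists (exist _ U (conj oU (fun u Uu => HUV u a Uu Va))).
Qed.

Lemma compact_shift (G : zmodType) (open : subset_of G -> Prop) (K : subset_of G) (c : G) :
  top_group open -> compact open K -> compact open (fun y => K (y + c)).
Proof.
move=> Ht HK I U HU Hcov.
have [|s Hs] := HK I (fun i x => U i (x - c)) (fun i => open_shift c Ht (HU i)).
  by move=> x Kx; apply: Hcov; rewrite /= subrK.
exists s => y Ky; have [i [Hi Ui]] := Hs _ Ky; exists i; split => //.
by rewrite addrK in Ui.
Qed.

Lemma lf_plus (G : zmodType) (open : subset_of G -> Prop) (L : subset_of G) (sF : seq G) :
  top_group open -> locally_finite open L ->
  locally_finite open (fun z => exists l f, [/\ L l, List.In f sF & z = l + f]).
Proof.
move=> Ht HL K HK. elim: sF => [|f sF [s Hs]].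
  by exists nil => z [[l [f [_ [] _]]] _].
have [s1 Hs1] := HL _ (compact_shift (c:=f) Ht HK).
exists (List.map (fun y => y + f) s1 ++ s).
move=> z [[l [g [Ll [<-|Hg] ->]]] Kz].
  by apply: List.in_or_app; left; apply: List.in_map; apply: Hs1; split.
apply: List.in_or_app; right; apply: Hs; split=> //; by exists l, g.
Qed.

Lemma fin_op (T : Type) (op : T -> T -> T) (A B : subset_of T) :
  finite_set A -> finite_set B ->
  finite_set (fun z => exists a b, [/\ A a, B b & z = op a b]).
Proof.
move=> [sa Ha] [sb Hb]; exists (List.flat_map (fun a => List.map (op a) sb) sa).
move=> z [a [b [Aa Bb ->]]]; apply/List.in_flat_map; exists a; split; first exact: Ha.
apply: List.in_map; exact: Hb.
Qed.

Lemma ud_of_lf (G : zmodType) (open : subset_of G -> Prop) (A S : subset_of G) :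
  sigma_compact_LCA open -> locally_finite open S ->
  (forall x y, A x -> A y -> S (y - x)) -> uniformly_discrete open A.
Proof.
move=> [[Htop Hc] Hhd Hlc _] HS HA.
have [_ _ Hint _ _] := Htop.
have [U0 [K0 [oU0 U00 cK0 UK]]] := Hlc 0.
have [p Hp] := HS K0 cK0.
have : exists U, [/\ open U, U 0, (forall u, U u -> U0 u) &
          forall d, List.In d p -> d <> 0 -> ~ U d].
  elim: p {Hp} => [|d p [U [oU U0' UU Hd]]].
    by exists U0; split.
  case: (classic (d = 0)) => [d0|dn0].
    exists U; split=> // e [<-|He]; [move=> H; case: (H d0) | exact: Hd].
  have [A' [B [oA oB A0 Bd disj]]] := Hhd 0 d (fun e => dn0 (esym e)).
  exists (fun x => U x /\ A' x); split.
  - exact: Hint.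
  - by split.
  - by move=> u [Uu _]; apply: UU.
  - move=> e [<-|He] Hne [Ue Ae]; first exact: disj d Ae Bd.
    exact: (Hd e He Hne Ue).
move=> [U [oU U0z UU Hd]]. exists U; split=> // x Ax y Ay [u [Uu yxu]].
case: (classic (u = 0)) => [u0|un0]; first by rewrite yxu u0 addr0.
exfalso; apply: (Hd u _ un0 Uu). apply: Hp; split; last by apply: UK; apply: UU.
have -> : u = y - x by rewrite yxu [x + u]addrC addrK.
exact: HA.
Qed.

Lemma ud_lf (G : zmodType) (open : subset_of G -> Prop) (A : subset_of G) :
  top_group open -> uniformly_discrete open A -> locally_finite open A.
Proof.
move=> Ht [U [oU U0 HU]] K HK.
have [Htop Hc] := Ht. have [_ _ Hint _ _] := Htop.
have := Hc 0 0 U oU; rewrite subrr => /(_ U0) [U1 [V1 [oU1 oV1 U10 V10 H1]]].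
pose V := fun x => U1 x /\ V1 x.
have oV : open V := Hint _ _ oU1 oV1.
have HVV : forall u v, V u -> V v -> U (u - v) by move=> u v [? _] [_ ?]; apply: H1.
have [|s Hs] := HK G (fun x y => V (y - x)) (fun x => open_shift x Ht oV).
  by move=> x _; exists x; rewrite /= subrr.
suff [l Hl] : exists l, forall z, A z -> (exists x, List.In x s /\ V (z - x)) -> List.In z l.
  by exists l => z [Az Kz]; apply: Hl Az _; exact: Hs.
elim: s {Hs} => [|x s [l Hl]]; first by exists nil => z _ [x [[] _]].
case: (classic (exists z0, A z0 /\ V (z0 - x))) => [[z0 [Az0 Vz0]]|Hno].
- exists (z0 :: l) => z Az [y [[<-|Hy] Vz]].
  + left; apply: esym; apply: (HU z0 Az0 z Az); exists ((z - x) - (z0 - x)); split.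
      exact: HVV.
    have e : (z - x) - (z0 - x) = z - z0 by rewrite opprB addrA subrK.
    by rewrite e addrC subrK.
  + right; exact: Hl Az (ex_intro _ y (conj Hy Vz)).
- exists l => z Az [y [[<-|Hy] Vz]]; first by case: Hno; exists z.
  exact: Hl Az (ex_intro _ y (conj Hy Vz)).
Qed.

Theorem lemma7p1 (G : zmodType) (open : subset_of G -> Prop) (L : subset_of G) :
  sigma_compact_LCA open -> relatively_dense open L ->
  (locally_finite open (diff3 L) <-> uniformly_discrete open (diff3 L)) /\
  (uniformly_discrete open (diff3 L) <->
     (locally_finite open L /\
      exists F : subset_of G, finite_set F /\
        forall z, diff2 L z -> plus_set L F z)).
Proof.
move=> LCA [K [cK HK]].
have Ht : top_group open by case: LCA.
have i_iii : locally_finite open (diff3 L) -> locally_finite open L /\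
      exists F : subset_of G, finite_set F /\ forall z, diff2 L z -> plus_set L F z.
  move=> HD3.
  have [l0 [k0 [Ll0 _ _]]] := HK 0.
  split.
    move=> K' cK'. have [s Hs] := HD3 _ (compact_shift (c:=l0 + l0) Ht cK').
    exists (List.map (fun y => y + (l0 + l0)) s) => x [Lx Kx].
    have -> : x = (x - (l0 + l0)) + (l0 + l0) by rewrite subrK.
    apply: List.in_map; apply: Hs; split; last by rewrite /= subrK.
    by exists x, l0, l0; split => //; rewrite opprD addrA.
  exists (fun k => diff3 L k /\ K k); split; first exact: HD3.
  move=> z [a [b [La Lb e1]]].
  have [l [k [Ll Kk e2]]] := HK z.
  exists l, k; split => //; split => //; exists a, b, l; split => //.
  by rewrite -e1 e2 [l + k]addrC addrK.
have iii_ii : (locally_finite open L /\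
      exists F : subset_of G, finite_set F /\ forall z, diff2 L z -> plus_set L F z) ->
      uniformly_discrete open (diff3 L).
  move=> [HL [F [HF H]]].
  pose G2 := fun z => exists a b, [/\ F a, F b & z = a + b].
  have HG2 : finite_set G2 by apply: fin_op.
  pose G3 := fun z => exists a b, [/\ F a, G2 b & z = a + b].
  have HG3 : finite_set G3 by apply: fin_op.
  have [s5 Hs5] : finite_set (fun z => exists a b, [/\ G3 a, G2 b & z = a - b]).
    by apply: (fin_op (fun a b => a - b)).
  apply: (ud_of_lf LCA (lf_plus s5 Ht HL)).
  have dec : forall a b c, L a -> L b -> L c -> exists l g, L l /\ G2 g /\ a - b - c = l + g.
    move=> a b c La Lb Lc.
    have [l1 [f1 [Ll1 Ff1 e1]]] := H (a - b) (ex_intro _ a (ex_intro _ b (And3 La Lb erefl))).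
    have [l2 [f2 [Ll2 Ff2 e2]]] := H (l1 - c) (ex_intro _ l1 (ex_intro _ c (And3 Ll1 Lc erefl))).
    exists l2, (f2 + f1); split => //; split; first by exists f2, f1.
    by rewrite e1 addrAC e2 addrA.
  move=> x y [a [b [c [La Lb Lc ->]]]] [a' [b' [c' [La' Lb' Lc' ->]]]].
  have [l [g [Ll [Gg ->]]]] := dec a b c La Lb Lc.
  have [l' [g' [Ll' [Gg' ->]]]] := dec a' b' c' La' Lb' Lc'.
  have [l4 [f4 [Ll4 Ff4 e4]]] := H (l' - l) (ex_intro _ l' (ex_intro _ l (And3 Ll' Ll erefl))).
  exists l4, ((f4 + g') - g); split => //.
    apply: Hs5; exists (f4 + g'), g; split => //; by exists f4, g'.
  by rewrite opprD addrACA e4 -!addrA.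
have ii_i : uniformly_discrete open (diff3 L) -> locally_finite open (diff3 L).
  exact: ud_lf.
split; split.
- by move/i_iii/iii_ii.
- exact: ii_i.
- by move/ii_i/i_iii.
- exact: iii_ii.
Qed.
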